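(* Consider the OCP and its QP reformulation as in the context, with symmetry group $\mathcal G$ and orbits $\mathcal O(\mathcal A)$ of active sets $\mathcal A\subseteq\mathcal Q$. If an active set $\mathcal{A}\subseteq\mathcal Q$ is non-primary, then every element of $\mathcal{D}(\mathcal{A})=\{\mathcal{A}\cup\hat{\mathcal{A}} : \hat{\mathcal{A}}\subseteq\{\max(\mathcal{A})+1,\dots,q\}\}$ is non-primary.
   Context: The OCP: $\min\ \|x(N)\|_P^2+\sum_{k=0}^{N-1}(\|x(k)\|_Q^2+\|u(k)\|_R^2)$ subject to $x(k+1)=Ax(k)+Bu(k)$, $u(k)\in\mathcal{U}$, $x(k)\in\mathcal{X}$ ($k=0,\dots,N-1$), $x(N)\in\mathcal{T}$, with $\mathcal{U},\mathcal{X},\mathcal{T}$ compact full-dimensional polytopes containing the origin in their interiors, each given by its irredundant halfspace representation with right-hand side 1. Eliminating states gives constraints $GU\le Ex(0)+1^q$ indexed by $\mathcal Q=\{1,\dots,q\}$. The OCP is symmetric to an invertible pair $(\Theta,\Omega)$ if $\Theta A=A\Theta$, $\Theta B=B\Omega$, $\Theta\mathcal{X}=\mathcal{X}$, $\Omega\mathcal{U}=\mathcal{U}$, $\Theta\mathcal{T}=\mathcal{T}$, $\Theta^TQ\Theta=Q$, $\Omega^TR\Omega=R$, $\Theta^TP\Theta=P$; $\mathcal G$ is the set of all such pairs (a group under pairwise multiplication). For $(\Theta,\Omega)\in\mathcal G$, $\pi^{(\Theta,\Omega)}$ is the permutation of $\mathcal Q$ mapping $i$ to the (assumed unique) $j$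 with $G_{\{i\}}=G_{\{j\}}(I^N\otimes\Omega)$, $E_{\{i\}}=E_{\{j\}}\Theta$; $\Pi^{(\Theta,\Omega)}(\mathcal A)=\{\pi^{(\Theta,\Omega)}(i):i\in\mathcal A\}$; the orbit of $\mathcal A\subseteq\mathcal Q$ is $\mathcal O(\mathcal A)=\{\Pi^{(\Theta,\Omega)}(\mathcal A):(\Theta,\Omega)\in\mathcal G\}$. The primary active set of an orbit $\mathcal O$ is the $\mathcal A\in\mathcal O$ such that $\min(\mathcal A\setminus\mathring{\mathcal A})<\min(\mathring{\mathcal A}\setminus\mathcal A)$ for all $\mathring{\mathcal A}\in\mathcal O\setminus\{\mathcal A\}$ (the lexicographically smallest element); an active set is non-primary if it is not the primary active set of its orbit. For $\mathcal A=\emptyset$, $\max(\mathcal A)$ is taken as $0$. *)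

(* Defs.v *)
From HB Require Import structures.
From mathcomp Require Import all_boot all_order all_algebra.
From mathcomp Require Import mxtens.
From mathcomp Require Import reals.
Set Implicit Arguments. Unset Strict Implicit. Unset Printing Implicit Defensive.
Import Order.TTheory GRing.Theory Num.Theory.
Local Open Scope ring_scope.

Section OCP.
Variable R : realType.

Definition in_poly (p d : nat) (H : 'M[R]_(p, d)) (x : 'cV[R]_d) : Prop :=
  forall r : 'I_p, (H *m x) r 0 <= 1.

Definition poly_bounded (p d : nat) (H : 'M[R]_(p, d)) : Prop :=
  exists M : R, forall x, in_poly H x -> forall j : 'I_d, `|x j 0| <= M.

Definition poly_irredundant (p d : nat) (H : 'M[R]_(p, d)) : Prop :=
  forall r : 'I_p, exists x : 'cV[R]_d,
    1 < (H *m x) r 0 /\ forall r' : 'I_p, r' != r -> (H *m x) r' 0 <= 1.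

Definition poly_invariant (p d : nat) (H : 'M[R]_(p, d)) (Th : 'M[R]_d) : Prop :=
  forall y : 'cV[R]_d, in_poly H y <-> exists x, in_poly H x /\ y = Th *m x.

Definition ocp_symmetry (n m pu px pt : nat)
  (A : 'M[R]_n) (B : 'M[R]_(n, m))
  (Hu : 'M[R]_(pu, m)) (Hx : 'M[R]_(px, n)) (Ht : 'M[R]_(pt, n))
  (Q : 'M[R]_n) (Rw : 'M[R]_m) (P : 'M[R]_n)
  (Th : 'M[R]_n) (Om : 'M[R]_m) : Prop :=
  Th \in unitmx /\ Om \in unitmx /\ Th *m A = A *m Th /\ Th *m B = B *m Om /\
  poly_invariant Hx Th /\ poly_invariant Hu Om /\ poly_invariant Ht Th /\
  Th^T *m Q *m Th = Q /\ Om^T *m Rw *m Om = Rw /\ Th^T *m P *m Th = P.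

(* Index type of the constraints of the condensed QP:
   inl (inl (k, r)) : row r of u(k) \in U,      k = 0..N-1
   inl (inr (k, r)) : row r of x(k) \in X,      k = 0..N-1
   inr r            : row r of x(N) \in T. *)
Definition cidx (N pu px pt : nat) : finType :=
  (('I_N * 'I_pu) + ('I_N * 'I_px) + 'I_pt)%type.

(* Stacked input U = [u(0); ...; u(N-1)] : 'cV_(N*m); entry j of U is the
   component (mxtens_unindex j).2 of u((mxtens_unindex j).1). *)

(* For x(k) = A^k x0 + sum_{l<k} A^(k-1-l) B u(l), the row vector of
   coefficients of U in h x(k). *)
Definition pred_row (n m N : nat) (A : 'M[R]_n) (B : 'M[R]_(n, m))
  (h : 'rV[R]_n) (k : nat) : 'rV[R]_(N * m) :=
  \row_(j < N * m)
    (if ((mxtens_unindex j).1 < k)%N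
     then (h *m A ^+ (k.-1 - (mxtens_unindex j).1) *m B) 0 (mxtens_unindex j).2
     else 0).

Definition G_row (n m N pu px pt : nat) (A : 'M[R]_n) (B : 'M[R]_(n, m))
  (Hu : 'M[R]_(pu, m)) (Hx : 'M[R]_(px, n)) (Ht : 'M[R]_(pt, n))
  (c : cidx N pu px pt) : 'rV[R]_(N * m) :=
  match c with
  | inl (inl (k, r)) =>
      \row_(j < N * m) (if (mxtens_unindex j).1 == k
                        then Hu r (mxtens_unindex j).2 else 0)
  | inl (inr (k, r)) => pred_row N A B (row r Hx) k
  | inr r => pred_row N A B (row r Ht) N
  end.

(* Row of E for constraint c  (G U <= E x0 + 1) *)
Definition E_row (n N pu px pt : nat) (A : 'M[R]_n)
  (Hx : 'M[R]_(px, n)) (Ht : 'M[R]_(pt, n))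
  (c : cidx N pu px pt) : 'rV[R]_n :=
  match c with
  | inl (inl _) => 0
  | inl (inr (k, r)) => - (row r Hx *m A ^+ k)
  | inr r => - (row r Ht *m A ^+ N)
  end.

Definition Gmat (n m N pu px pt q : nat) (A : 'M[R]_n) (B : 'M[R]_(n, m))
  (Hu : 'M[R]_(pu, m)) (Hx : 'M[R]_(px, n)) (Ht : 'M[R]_(pt, n))
  (ord : 'I_q -> cidx N pu px pt) : 'M[R]_(q, N * m) :=
  \matrix_(i < q) G_row A B Hu Hx Ht (ord i).

Definition Emat (n N pu px pt q : nat) (A : 'M[R]_n)
  (Hx : 'M[R]_(px, n)) (Ht : 'M[R]_(pt, n))
  (ord : 'I_q -> cidx N pu px pt) : 'M[R]_(q, n) :=
  \matrix_(i < q) E_row A Hx Ht (ord i).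

Definition pi_rel (n m N q : nat) (G : 'M[R]_(q, N * m)) (E : 'M[R]_(q, n))
  (Th : 'M[R]_n) (Om : 'M[R]_m) (i j : 'I_q) : bool :=
  (row i G == row j G *m ((1%:M : 'M[R]_N) *t Om)) && (row i E == row j E *m Th).

Definition Pi_set (n m N q : nat) (G : 'M[R]_(q, N * m)) (E : 'M[R]_(q, n))
  (Th : 'M[R]_n) (Om : 'M[R]_m) (S : {set 'I_q}) : {set 'I_q} :=
  [set j | [exists i in S, pi_rel G E Th Om i j]].

End OCP.

(* minimum of a set of indices (value q for the empty set, never used
   in a comparison that matters since orbit elements have equal size) *)
Definition setmin (q : nat) (S : {set 'I_q}) : nat :=
  \big[minn/q]_(i in S) (i : nat).

Section Orbits.
Variable R : realType.
Local Open Scope ring_scope.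

Definition in_orbit (n m N q : nat) (sym : 'M[R]_n -> 'M[R]_m -> Prop)
  (G : 'M[R]_(q, N * m)) (E : 'M[R]_(q, n)) (S T : {set 'I_q}) : Prop :=
  exists Th Om, sym Th Om /\ T = Pi_set G E Th Om S.

Definition primary (n m N q : nat) (sym : 'M[R]_n -> 'M[R]_m -> Prop)
  (G : 'M[R]_(q, N * m)) (E : 'M[R]_(q, n)) (S : {set 'I_q}) : Prop :=
  forall T, in_orbit sym G E S T -> T != S ->
    (setmin (S :\: T) < setmin (T :\: S))%N.

Definition non_primary (n m N q : nat) (sym : 'M[R]_n -> 'M[R]_m -> Prop)
  (G : 'M[R]_(q, N * m)) (E : 'M[R]_(q, n)) (S : {set 'I_q}) : Prop :=
  ~ primary sym G E S.
End Orbits.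

(* Main.v *)
Require Import Defs.
From HB Require Import structures.
From mathcomp Require Import all_boot all_order all_algebra.
From mathcomp Require Import mxtens.
From mathcomp Require Import reals.
Import Order.TTheory GRing.Theory Num.Theory.
Local Open Scope ring_scope.

Lemma setmin_le (q : nat) (X : {set 'I_q}) (x : 'I_q) :
  x \in X -> (setmin X <= x)%N.
Proof.
move=> xX; rewrite /setmin.
have : x \in index_enum 'I_q by rewrite mem_index_enum.
elim: (index_enum 'I_q) => [//|y s IH] /=.
rewrite inE big_cons => /orP [/eqP <-|xs].
  by rewrite xX geq_minl.
case: ifP => _; last exact: IH.
exact: leq_trans (geq_minr _ _) (IH xs).
Qed.

Lemma setmin_ge (q : nat) (X : {set 'I_q}) (a : nat) :
  (a <= q)%N -> (forall y : 'I_q, y \in X -> (a <= y)%N) -> (a <= setmin X)%N.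
Proof.
move=> aq H; rewrite /setmin; apply: (big_ind (fun v => a <= v)%N) => //.
by move=> u v Hu Hv; rewrite leq_min Hu Hv.
Qed.

Lemma setmin_lq (q : nat) (X : {set 'I_q}) : (setmin X <= q)%N.
Proof.
rewrite /setmin; apply: (big_ind (fun v => v <= q)%N).
- by [].
- by move=> u v Hu _; exact: leq_trans (geq_minl _ _) Hu.
- by move=> i _; exact: ltnW (ltn_ord i).
Qed.

Lemma setmin_mem (q : nat) (X : {set 'I_q}) :
  setmin X = q \/ exists2 x : 'I_q, x \in X & (x : nat) = setmin X.
Proof.
rewrite /setmin; apply: (big_ind (fun v => v = q \/ exists2 x : 'I_q, x \in X & (x:nat) = v)).
- by left.
- move=> u v Hu Hv; cbv beta; case: (leqP u v) => _; [exact: Hu | exact: Hv].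
- by move=> i iX; right; exists i.
Qed.

Arguments setmin_le {q X x}.
Arguments setmin_ge {q X a}.
Arguments setmin_lq {q X}.
Arguments setmin_mem {q} X.

Theorem theorem4 (R : realType) (n m N pu px pt q : nat)
  (A : 'M[R]_n) (B : 'M[R]_(n, m))
  (Hu : 'M[R]_(pu, m)) (Hx : 'M[R]_(px, n)) (Ht : 'M[R]_(pt, n))
  (Q : 'M[R]_n) (Rw : 'M[R]_m) (P : 'M[R]_n)
  (ord : 'I_q -> cidx N pu px pt) :
  poly_bounded Hu -> poly_bounded Hx -> poly_bounded Ht ->
  poly_irredundant Hu -> poly_irredundant Hx -> poly_irredundant Ht ->
  bijective ord ->
  let G := Gmat A B Hu Hx Ht ord in
  let E := Emat A Hx Ht ord in
  let sym := ocp_symmetry A B Hu Hx Ht Q Rw P in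
  (forall Th Om, sym Th Om -> forall i : 'I_q,
      exists! j : 'I_q, pi_rel G E Th Om i j) ->
  forall S : {set 'I_q}, non_primary sym G E S ->
  forall Shat : {set 'I_q},
    (forall j, j \in Shat -> forall i, i \in S -> (i < j)%N) ->
    non_primary sym G E (S :|: Shat).
Proof.
move=> _ _ _ _ _ _ _ G E sym Huniq S HnS Shat Hshat Hprim'.
apply: HnS => T [Th [Om [Hs ->]]] Hne.
set T0 := Pi_set G E Th Om S.
have card_le : (#|T0| <= #|S|)%N.
  pose f i := odflt i [pick j | pi_rel G E Th Om i j].
  apply: leq_trans (leq_imset_card f S).
  apply: subset_leq_card; apply/subsetP => j.
  rewrite inE => /existsP [i /andP [iS Hij]].
  apply/imsetP; exists i => //; rewrite /f.
  case: pickP => [j' Hj'|/(_ j)]; last by rewrite Hij.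
  have [k [_ Hk]] := Huniq Th Om Hs i.
  by rewrite /= -(Hk _ Hij) (Hk _ Hj').
rewrite ltnNge; apply/negP => Hle.
have [b bD2] : exists b, b \in S :\: T0.
  case: (set_0Vmem (S :\: T0)) => [H0|[b Hb]]; last by exists b.
  exfalso; move/eqP: Hne; apply; apply/eqP; rewrite eq_sym eqEcard card_le andbT.
  by rewrite -setD_eq0 H0.
have bS : b \in S by move: bD2; rewrite inE => /andP [].
have Hmin_b := setmin_le bD2.
have [Hq|[a aD1 Ha]] := setmin_mem (T0 :\: S).
  by move: (leq_trans Hle Hmin_b); rewrite Hq leqNgt ltn_ord.
move: aD1; rewrite inE => /andP [aS aT].
have ab : forall b', b' \in S :\: T0 -> (a < b')%N.
  move=> b' Hb'; have := setmin_le Hb'; move: Hb'; rewrite inE => /andP [_ b'S] Hb'.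
  have aleb : (a <= b')%N by rewrite (leq_trans _ Hb') // Ha.
  rewrite ltn_neqAle aleb andbT.
  by apply/negP => /eqP E'; move: aS; rewrite (ord_inj E') b'S.
have aShat : a \notin Shat.
  apply/negP => aSh; have := Hshat _ aSh _ bS; have := ab _ bD2.
  by move=> h1 h2; move: (ltn_trans h1 h2); rewrite ltnn.
set T' := Pi_set G E Th Om (S :|: Shat).
have sub : T0 \subset T'.
  apply/subsetP => j; rewrite !inE => /existsP [i /andP [iS Hij]].
  by apply/existsP; exists i; rewrite inE iS Hij.
have aD' : a \in T' :\: (S :|: Shat).
  by rewrite in_setD in_setU (negPf aS) (negPf aShat) (subsetP sub _ aT).
have Hne' : T' != S :|: Shat.
  apply/negP => /eqP Heq; move: aD'; by rewrite Heq setDv inE.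
have := Hprim' T' (ex_intro _ Th (ex_intro _ Om (conj Hs erefl))) Hne'.
have H1 := setmin_le aD'.
have H2 : (a <= setmin ((S :|: Shat) :\: T'))%N.
  apply: setmin_ge; first exact: ltnW (ltn_ord a).
  move=> y; rewrite in_setD in_setU => /andP [yT' /orP [yS|ySh]].
  - apply: ltnW; apply: ab; rewrite in_setD yS andbT.
    by apply/negP => yT; move: yT'; rewrite (subsetP sub _ yT).
  - apply: ltnW; apply: ltn_trans (ab _ bD2) (Hshat _ ySh _ bS).
by rewrite ltnNge (leq_trans H1 H2).
Qed.
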